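(* Let $A\in\mathbf L(\mathfrak H)$ be a normal contraction and let $\Sigma=\{T;\mathfrak D_{A^*},\mathfrak D_A,\mathfrak H\}$ be the system with $T=\begin{pmatrix}-A^*&D_A\\ D_{A^*}&A\end{pmatrix}:\mathfrak D_{A^*}\oplus\mathfrak H\to\mathfrak D_A\oplus\mathfrak H$. Then its controllable and observable subspaces coincide, $\mathfrak H^c_\Sigma=\mathfrak H^o_\Sigma$, where $\mathfrak H^c_\Sigma=\overline{\rm span}\{A^nD_{A^*}\mathfrak D_{A^*}:n\ge0\}$ and $\mathfrak H^o_\Sigma=\overline{\rm span}\{A^{*n}D_A\mathfrak D_A:n\ge0\}$, and the following are equivalent: (i) $\Sigma$ is simple; (ii) $\Sigma$ is controllable; (iii) $\Sigma$ is observable; (iv) $\Sigma$ is minimal.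
   Context: A system $\tau=\{T;\mathfrak M,\mathfrak N,\mathfrak H\}$ consists of Hilbert spaces $\mathfrak M$ (input), $\mathfrak N$ (output), $\mathfrak H$ (state) and a bounded operator $T=\begin{pmatrix}D&C\\ B&A\end{pmatrix}:\mathfrak M\oplus\mathfrak H\to\mathfrak N\oplus\mathfrak H$. Its controllable and observable subspaces are $\mathfrak H^c=\overline{\rm span}\{A^nB\mathfrak M:n\ge0\}$, $\mathfrak H^o=\overline{\rm span}\{A^{*n}C^*\mathfrak N:n\ge0\}$; $\tau$ is controllable if $\mathfrak H^c=\mathfrak H$, observable if $\mathfrak H^o=\mathfrak H$, minimal if both, simple if $\mathfrak H=\overline{\mathfrak H^c+\mathfrak H^o}$. $D_A=(I-A^*A)^{1/2}$, $\mathfrak D_A=\overline{\rm ran}\,D_A$. *)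

(* Defs.v *)
From Stdlib Require Import Reals.
Open Scope R_scope.
Set Implicit Arguments.

Record C := mkC { Cre : R ; Cim : R }.
Definition C0 : C := mkC 0 0.
Definition C1 : C := mkC 1 0.
Definition Cadd (a b : C) : C := mkC (Cre a + Cre b) (Cim a + Cim b).
Definition Cmul (a b : C) : C :=
  mkC (Cre a * Cre b - Cim a * Cim b) (Cre a * Cim b + Cim a * Cre b).
Definition Cconj (a : C) : C := mkC (Cre a) (- Cim a).

Record Hilbert := {
  car :> Type;
  vadd : car -> car -> car;
  vzero : car;
  vopp : car -> car;
  vscal : C -> car -> car;
  inner : car -> car -> C;
  vadd_assoc : forall x y z, vadd x (vadd y z) = vadd (vadd x y) z;
  vadd_comm : forall x y, vadd x y = vadd y x;
  vadd_0 : forall x, vadd x vzero = x;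
  vadd_opp : forall x, vadd x (vopp x) = vzero;
  vscal_1 : forall x, vscal C1 x = x;
  vscal_mul : forall a b x, vscal a (vscal b x) = vscal (Cmul a b) x;
  vscal_addv : forall a x y, vscal a (vadd x y) = vadd (vscal a x) (vscal a y);
  vscal_adds : forall a b x, vscal (Cadd a b) x = vadd (vscal a x) (vscal b x);
  inner_add_l : forall x y z, inner (vadd x y) z = Cadd (inner x z) (inner y z);
  inner_scal_l : forall a x y, inner (vscal a x) y = Cmul a (inner x y);
  inner_conj : forall x y, inner y x = Cconj (inner x y);
  inner_pos : forall x, 0 <= Cre (inner x x);
  inner_def : forall x, Cre (inner x x) = 0 -> x = vzero;
  complete : forall u : nat -> car,
    (forall eps, 0 < eps -> exists N, forall m n, (N <= m)%nat -> (N <= n)%nat ->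
        sqrt (Cre (inner (vadd (u m) (vopp (u n))) (vadd (u m) (vopp (u n))))) < eps) ->
    exists l, forall eps, 0 < eps -> exists N, forall n, (N <= n)%nat ->
        sqrt (Cre (inner (vadd (u n) (vopp l)) (vadd (u n) (vopp l)))) < eps
}.

Arguments vadd {h}. Arguments vzero {h}. Arguments vopp {h}.
Arguments vscal {h}. Arguments inner {h}.

Section Ops.
Context {H : Hilbert}.

Definition norm (x : H) : R := sqrt (Cre (inner x x)).
Definition vsub (x y : H) : H := vadd x (vopp y).

Definition bounded_linear (T : H -> H) : Prop :=
  (forall x y, T (vadd x y) = vadd (T x) (T y)) /\
  (forall a x, T (vscal a x) = vscal a (T x)) /\
  (exists M, forall x, norm (T x) <= M * norm x).

Definition is_adjoint (T Ts : H -> H) : Prop :=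
  forall x y, inner (T x) y = inner x (Ts y).

Definition contraction (T : H -> H) : Prop := forall x, norm (T x) <= norm x.

Definition normal_op (T Ts : H -> H) : Prop := forall x, T (Ts x) = Ts (T x).

(* D is the defect operator D_T = (I - T^* T)^{1/2}: the (unique) positive
   square root of I - T^* T. *)
Definition is_defect (T Ts D : H -> H) : Prop :=
  bounded_linear D /\ is_adjoint D D /\
  (forall x, 0 <= Cre (inner (D x) x)) /\
  (forall x, D (D x) = vsub x (Ts (T x))).

Definition range (T : H -> H) : H -> Prop := fun y => exists x, y = T x.

Definition closure (S : H -> Prop) : H -> Prop :=
  fun x => forall eps, 0 < eps -> exists y, S y /\ norm (vsub x y) < eps.

Inductive span (S : H -> Prop) : H -> Prop :=
| span_zero : span S vzero
| span_cons : forall a y x, S y -> span S x -> span S (vadd (vscal a y) x).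

Definition cspan (S : H -> Prop) : H -> Prop := closure (span S).

Definition sumset (U V : H -> Prop) : H -> Prop :=
  fun x => exists u v, U u /\ V v /\ x = vadd u v.

Definition defect_space (D : H -> H) : H -> Prop := closure (range D).

Definition sets_eq (U V : H -> Prop) : Prop := forall x, U x <-> V x.
Definition full (U : H -> Prop) : Prop := forall x, U x.

(* Controllable subspace of a system with main operator A and input operator
   B defined on the input space M (a subset of H here):
   closed span {A^n B M : n >= 0}. *)
Definition ctrl_space (A B : H -> H) (M : H -> Prop) : H -> Prop :=
  cspan (fun x => exists n m, M m /\ x = Nat.iter n A (B m)).
Definition obs_space (As Cs : H -> H) (N : H -> Prop) : H -> Prop :=
  cspan (fun x => exists n k, N k /\ x = Nat.iter n As (Cs k)).

(* The system Sigma = {[-A^*, D_A; D_{A^*}, A]; D_{A^*}, D_A, H}: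
   B = D_{A^*} on D_{A^*}-space, C = D_A : H -> D_A-space, so C^* = D_A
   restricted to the D_A-space. *)
Definition Hc_Sigma (A DAs : H -> H) := ctrl_space A DAs (defect_space DAs).
Definition Ho_Sigma (As DA : H -> H) := obs_space As DA (defect_space DA).

Definition sys_controllable (Hc : H -> Prop) := full Hc.
Definition sys_observable (Ho : H -> Prop) := full Ho.
Definition sys_minimal (Hc Ho : H -> Prop) := full Hc /\ full Ho.
Definition sys_simple (Hc Ho : H -> Prop) := full (closure (sumset Hc Ho)).

End Ops.

(* Main.v *)
Require Import Defs.
From Stdlib Require Import Reals Lra Psatz.
Open Scope R_scope.
Arguments vadd_assoc {h}. Arguments vadd_comm {h}. Arguments vadd_0 {h}. Arguments vadd_opp {h}.
Arguments vscal_1 {h}. Arguments vscal_mul {h}. Arguments vscal_addv {h}. Arguments vscal_adds {h}.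
Arguments inner_add_l {h}. Arguments inner_scal_l {h}. Arguments inner_conj {h}. Arguments inner_pos {h}. Arguments inner_def {h}.

Lemma vadd_0l {H : Hilbert} (x : H) : vadd vzero x = x.
Proof. rewrite vadd_comm. apply vadd_0. Qed.

Lemma vadd_cancel {H : Hilbert} (x y z : H) : vadd x z = vadd y z -> x = y.
Proof.
  intro E. rewrite <- (vadd_0 x), <- (vadd_0 y), <- (vadd_opp z), !vadd_assoc, E. reflexivity.
Qed.

Lemma opp_unique {H : Hilbert} (x y : H) : vadd x y = vzero -> y = vopp x.
Proof.
  intro E. apply (vadd_cancel _ _ x). rewrite (vadd_comm y), E, vadd_comm, vadd_opp. reflexivity.
Qed.

Lemma opp_add {H : Hilbert} (x y : H) : vopp (vadd x y) = vadd (vopp x) (vopp y).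
Proof.
  symmetry. apply opp_unique.
  rewrite <- vadd_assoc, (vadd_assoc y), (vadd_comm y), <- (vadd_assoc (vopp x)),
    (vadd_opp y), vadd_0, vadd_opp. reflexivity.
Qed.

Lemma additive_zero {H : Hilbert} (T : H -> H) :
  (forall x y, T (vadd x y) = vadd (T x) (T y)) -> T vzero = vzero.
Proof.
  intro Ha. apply (vadd_cancel _ _ (T vzero)). rewrite <- Ha, !vadd_0, vadd_0l. reflexivity.
Qed.

Lemma additive_opp {H : Hilbert} (T : H -> H) :
  (forall x y, T (vadd x y) = vadd (T x) (T y)) -> forall x, T (vopp x) = vopp (T x).
Proof.
  intros Ha x. apply opp_unique. rewrite <- Ha, vadd_opp. apply (additive_zero _ Ha).
Qed.

Lemma additive_sub {H : Hilbert} (T : H -> H) :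
  (forall x y, T (vadd x y) = vadd (T x) (T y)) -> forall x y, T (vsub x y) = vsub (T x) (T y).
Proof.
  intros Ha x y. unfold vsub. rewrite Ha, (additive_opp _ Ha). reflexivity.
Qed.

Lemma sub_add {H : Hilbert} (x y u v : H) :
  vsub (vadd x y) (vadd u v) = vadd (vsub x u) (vsub y v).
Proof.
  unfold vsub. rewrite opp_add, !vadd_assoc. f_equal.
  rewrite <- !vadd_assoc. f_equal. apply vadd_comm.
Qed.

Lemma sub_chain {H : Hilbert} (x y z : H) : vsub x z = vadd (vsub x y) (vsub y z).
Proof.
  unfold vsub. rewrite <- !vadd_assoc, (vadd_assoc (vopp y)), (vadd_comm (vopp y)), vadd_opp, vadd_0l.
  reflexivity.
Qed.

Lemma re_add_l {H : Hilbert} (x y z : H) : Cre (inner (vadd x y) z) = Cre (inner x z) + Cre (inner y z).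
Proof. rewrite inner_add_l. reflexivity. Qed.

Lemma re_sym {H : Hilbert} (x y : H) : Cre (inner x y) = Cre (inner y x).
Proof. rewrite (inner_conj y x). reflexivity. Qed.

Lemma im_self {H : Hilbert} (x : H) : Cim (inner x x) = 0.
Proof. assert (E := inner_conj x x). destruct (inner x x) as [a b]. simpl in *. injection E. lra. Qed.

Lemma inner_zero_l {H : Hilbert} (y : H) : inner vzero y = C0.
Proof.
  assert (E := inner_add_l (@vzero H) vzero y). rewrite vadd_0 in E.
  destruct (inner vzero y) as [a b]. unfold Cadd in E; simpl in E. injection E. intros. unfold C0. f_equal; lra.
Qed.

Lemma norm_zero {H : Hilbert} : norm (@vzero H) = 0.
Proof. unfold norm. rewrite inner_zero_l. simpl. apply sqrt_0. Qed.

Lemma norm_nonneg {H : Hilbert} (x : H) : 0 <= norm x.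
Proof. apply sqrt_pos. Qed.

Lemma re_scal_l {H : Hilbert} (a : Defs.C) (x y : H) :
  Cre (inner (vscal a x) y) = Cre a * Cre (inner x y) - Cim a * Cim (inner x y).
Proof. rewrite inner_scal_l. reflexivity. Qed.

Lemma quad_expand {H : Hilbert} (x y : H) (t : R) :
  Cre (inner (vadd x (vscal (mkC t 0) y)) (vadd x (vscal (mkC t 0) y))) =
  Cre (inner x x) + 2 * t * Cre (inner x y) + t * t * Cre (inner y y).
Proof.
  rewrite re_add_l, re_scal_l, (re_sym x), re_add_l, re_scal_l.
  rewrite (re_sym y (vadd _ _)), re_add_l, re_scal_l. simpl.
  rewrite (re_sym y x). ring.
Qed.

Lemma cauchy_schwarz_sq {H : Hilbert} (x y : H) :
  Cre (inner x y) * Cre (inner x y) <= Cre (inner x x) * Cre (inner y y).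
Proof.
  set (a := Cre (inner x x)); set (b := Cre (inner x y)); set (c := Cre (inner y y)).
  assert (Q : forall t, 0 <= a + 2 * t * b + t * t * c).
  { intro t. unfold a, b, c. rewrite <- quad_expand. apply inner_pos. }
  assert (Ha : 0 <= a) by apply inner_pos.
  assert (Hc : 0 <= c) by apply inner_pos.
  destruct (Req_dec c 0) as [E|E].
  - rewrite E. destruct (Req_dec b 0) as [Eb|Eb].
    + rewrite Eb. lra.
    + exfalso. specialize (Q (- (a + 1) / (2 * b))). rewrite E in Q.
      assert (2 * (- (a + 1) / (2 * b)) * b = - (a+1)) by (field; auto). nra.
  - specialize (Q (- b / c)).
    assert (E2 : a + 2 * (- b / c) * b + (- b / c) * (- b / c) * c = a - b * b / c) by (field; auto).
    rewrite E2 in Q.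
    assert (0 < c) by lra.
    assert (b * b / c <= a) by lra.
    apply Rmult_le_reg_r with (/ c). apply Rinv_0_lt_compat; lra.
    replace (a * c * / c) with a by (field; lra). unfold Rdiv in *. lra.
Qed.

Lemma cauchy_schwarz {H : Hilbert} (x y : H) : Cre (inner x y) <= norm x * norm y.
Proof.
  unfold norm. rewrite <- sqrt_mult by apply inner_pos.
  apply Rle_trans with (Rabs (Cre (inner x y))). apply Rle_abs.
  rewrite <- sqrt_Rsqr_abs. apply sqrt_le_1_alt. unfold Rsqr. apply cauchy_schwarz_sq.
Qed.

Lemma norm_triangle {H : Hilbert} (x y : H) : norm (vadd x y) <= norm x + norm y.
Proof.
  assert (E : Cre (inner (vadd x y) (vadd x y)) = Cre (inner x x) + 2 * Cre (inner x y) + Cre (inner y y)).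
  { rewrite re_add_l, (re_sym x), (re_sym y), !re_add_l, (re_sym y x). ring. }
  unfold norm at 1. rewrite E.
  assert (cs := cauchy_schwarz x y).
  assert (nx := norm_nonneg x). assert (ny := norm_nonneg y).
  rewrite <- (sqrt_Rsqr (norm x + norm y)) by lra. apply sqrt_le_1_alt.
  unfold Rsqr. unfold norm in *.
  rewrite <- (sqrt_sqrt (Cre (inner x x))) at 1 by apply inner_pos.
  rewrite <- (sqrt_sqrt (Cre (inner y y))) at 1 by apply inner_pos.
  nra.
Qed.

Lemma norm_scal {H : Hilbert} (a : Defs.C) (x : H) :
  norm (vscal a x) = sqrt (Cre a * Cre a + Cim a * Cim a) * norm x.
Proof.
  unfold norm. rewrite <- sqrt_mult.
  - f_equal. rewrite re_scal_l. rewrite (inner_conj (vscal a x) x), inner_scal_l.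
    assert (Hi := im_self x). destruct (inner x x) as [p q]. simpl in *. subst q. destruct a as [ar ai]. simpl. ring.
  - nra.
  - apply inner_pos.
Qed.

Definition Lip {H : Hilbert} (f : H -> H) (K : R) : Prop :=
  0 < K /\ forall x y, norm (vsub (f x) (f y)) <= K * norm (vsub x y).

Lemma closure_incl {H : Hilbert} (S : H -> Prop) x : S x -> closure S x.
Proof.
  intros Sx eps He. exists x. split; auto. unfold vsub. rewrite vadd_opp, norm_zero. exact He.
Qed.

Lemma closure_mono {H : Hilbert} (S S' : H -> Prop) :
  (forall x, S x -> S' x) -> forall x, closure S x -> closure S' x.
Proof.
  intros I x Cx eps He. destruct (Cx eps He) as [y [Sy Ny]]. exists y; auto.
Qed.

Lemma closure_closure {H : Hilbert} (S : H -> Prop) x : closure (closure S) x -> closure S x.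
Proof.
  intros Cx eps He. destruct (Cx (eps/2)) as [y [Cy Ny]]. lra.
  destruct (Cy (eps/2)) as [z [Sz Nz]]. lra.
  exists z. split; auto. rewrite (sub_chain x y z).
  eapply Rle_lt_trans. apply norm_triangle. lra.
Qed.

Lemma closure_add {H : Hilbert} (S : H -> Prop) :
  (forall x y, S x -> S y -> S (vadd x y)) ->
  forall x y, closure S x -> closure S y -> closure S (vadd x y).
Proof.
  intros Ha x y Cx Cy eps He. destruct (Cx (eps/2)) as [u [Su Nu]]. lra.
  destruct (Cy (eps/2)) as [v [Sv Nv]]. lra.
  exists (vadd u v). split; auto. rewrite sub_add.
  eapply Rle_lt_trans. apply norm_triangle. lra.
Qed.

Lemma closure_map {H : Hilbert} (f : H -> H) K (S S' : H -> Prop) :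
  Lip f K -> (forall s, S s -> S' (f s)) -> forall x, closure S x -> closure S' (f x).
Proof.
  intros [HK Hf] Hs x Cx eps He. destruct (Cx (eps / K)) as [y [Sy Ny]].
  apply Rdiv_lt_0_compat; lra.
  exists (f y). split; auto. eapply Rle_lt_trans. apply Hf.
  apply Rmult_lt_compat_l with (r := K) in Ny; auto.
  replace (K * (eps / K)) with eps in Ny by (field; lra). exact Ny.
Qed.

Lemma bl_lip {H : Hilbert} (T : H -> H) : bounded_linear T -> exists K, Lip T K.
Proof.
  intros [Ha [_ [M HM]]]. exists (Rabs M + 1). split.
  - assert (0 <= Rabs M) by apply Rabs_pos. lra.
  - intros x y. rewrite <- (additive_sub _ Ha). eapply Rle_trans. apply HM.
    apply Rmult_le_compat_r. apply norm_nonneg.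
    assert (M <= Rabs M) by apply Rle_abs. lra.
Qed.

Lemma lip_comp {H : Hilbert} (f g : H -> H) K1 K2 :
  Lip f K1 -> Lip g K2 -> Lip (fun x => f (g x)) (K1 * K2).
Proof.
  intros [H1 F] [H2 G]. split. nra.
  intros x y. eapply Rle_trans. apply F. rewrite Rmult_assoc.
  apply Rmult_le_compat_l. lra. apply G.
Qed.

Lemma lip_iter {H : Hilbert} (T : H -> H) K : Lip T K -> forall n, exists K', Lip (Nat.iter n T) K'.
Proof.
  intros LT n. induction n as [|n [K' IH]].
  - exists 1. split. lra. intros x y. simpl. lra.
  - exists (K * K'). apply (lip_comp _ _ _ _ LT IH).
Qed.

Lemma lip_scal {H : Hilbert} (a : Defs.C) : exists K, Lip (@vscal H a) K.
Proof.
  exists (sqrt (Cre a * Cre a + Cim a * Cim a) + 1). split.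
  - assert (0 <= sqrt (Cre a * Cre a + Cim a * Cim a)) by apply sqrt_pos. lra.
  - intros x y. rewrite <- (additive_sub _ (vscal_addv a)), norm_scal.
    apply Rmult_le_compat_r. apply norm_nonneg. lra.
Qed.

Lemma span_add {H : Hilbert} (S : H -> Prop) x y : span S x -> span S y -> span S (vadd x y).
Proof.
  intros Sx Sy. induction Sx as [|a z x Sz Sx IH].
  - rewrite vadd_0l. exact Sy.
  - rewrite <- vadd_assoc. apply span_cons; auto.
Qed.

Lemma iter_comm {H : Hilbert} (T P : H -> H) : (forall x, T (P x) = P (T x)) ->
  forall n x, Nat.iter n T (P x) = P (Nat.iter n T x).
Proof.
  intros Hc n x. induction n; simpl; auto. rewrite IHn. apply Hc.
Qed.

Lemma key {H : Hilbert} (T D : H -> H) :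
  bounded_linear T -> bounded_linear D -> (forall x, T (D (D x)) = D (D (T x))) ->
  sets_eq (cspan (fun x => exists n m, closure (range D) m /\ x = Nat.iter n T (D m)))
          (closure (range (fun y => D (D y)))).
Proof.
  intros BT BD Hc.
  assert (BD' := BD). destruct BD' as [Da [Ds _]].
  destruct (bl_lip _ BT) as [KT LT]. destruct (bl_lip _ BD) as [KD LD].
  set (S := closure (range (fun y => D (D y)))).
  assert (Sadd : forall x y, S x -> S y -> S (vadd x y)).
  { apply closure_add. intros x y [a ->] [b ->]. exists (vadd a b). rewrite !Da. reflexivity. }
  assert (Sscal : forall a x, S x -> S (vscal a x)).
  { intros a x Sx. destruct (lip_scal (H:=H) a) as [K LK].
    apply (closure_map _ _ (range (fun y => D (D y))) _ LK); auto.
    intros s [w ->]. exists (vscal a w). rewrite !Ds. reflexivity. }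
  intro x. split.
  - intro Cx. apply closure_closure. revert x Cx. apply closure_mono.
    intros x Sp. induction Sp as [|a y x Gy Sp IH].
    + apply closure_incl. exists vzero. rewrite !(additive_zero _ Da). reflexivity.
    + apply Sadd; auto. apply Sscal.
      destruct Gy as [n [m [Cm ->]]].
      destruct (lip_iter _ _ LT n) as [K' LI].
      apply (closure_map (fun m => Nat.iter n T (D m)) _ (range D) _ (lip_comp _ _ _ _ LI LD)); auto.
      intros s [w ->]. exists (Nat.iter n T w). apply (iter_comm T (fun y => D (D y))). exact Hc.
  - apply closure_mono. intros z [w ->].
    rewrite <- (vadd_0 (D (D w))), <- (vscal_1 (D (D w))). apply span_cons; [|apply span_zero].
    exists 0%nat, (D w). split; auto. apply closure_incl. exists w; reflexivity.
Qed.

Theorem proposition2p3 (H : Hilbert) (A As DA DAs : H -> H) :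
  bounded_linear A -> bounded_linear As -> is_adjoint A As ->
  normal_op A As -> contraction A ->
  is_defect A As DA -> is_defect As A DAs ->
  sets_eq (Hc_Sigma A DAs) (Ho_Sigma As DA) /\
  ((sys_simple (Hc_Sigma A DAs) (Ho_Sigma As DA) <-> sys_controllable (Hc_Sigma A DAs)) /\
   (sys_controllable (Hc_Sigma A DAs) <-> sys_observable (Ho_Sigma As DA)) /\
   (sys_observable (Ho_Sigma As DA) <-> sys_minimal (Hc_Sigma A DAs) (Ho_Sigma As DA))).
Proof.
  intros BA BAs _ Hn _ [BDA [_ [_ DA2]]] [BDAs [_ [_ DAs2]]].
  assert (Aa := proj1 BA). assert (Asa := proj1 BAs).
  assert (EP : forall y, DAs (DAs y) = DA (DA y)).
  { intro y. rewrite DAs2, DA2, Hn. reflexivity. }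
  assert (C1 : forall y, A (DAs (DAs y)) = DAs (DAs (A y))).
  { intro y. rewrite !DAs2, (additive_sub _ Aa), Hn. reflexivity. }
  assert (C2 : forall y, As (DA (DA y)) = DA (DA (As y))).
  { intro y. rewrite !DA2, (additive_sub _ Asa), Hn. reflexivity. }
  assert (K1 := key A DAs BA BDAs C1).
  assert (K2 := key As DA BAs BDA C2).
  assert (HK1 : sets_eq (Hc_Sigma A DAs) (closure (range (fun y => DA (DA y))))).
  { intro x. unfold Hc_Sigma, ctrl_space, defect_space. rewrite (K1 x).
    split; apply closure_mono; intros z [w ->]; exists w; auto. }
  assert (HK2 : sets_eq (Ho_Sigma As DA) (closure (range (fun y => DA (DA y))))).
  { intro x. unfold Ho_Sigma, obs_space, defect_space. exact (K2 x). }
  assert (Heq : sets_eq (Hc_Sigma A DAs) (Ho_Sigma As DA)).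
  { intro x. rewrite (HK1 x), (HK2 x). tauto. }
  split; [exact Heq|]. split; [|split].
  - unfold sys_simple, sys_controllable, full. split.
    + intros F x. unfold Hc_Sigma, ctrl_space, cspan. apply closure_closure.
      refine (closure_mono _ _ _ x (F x)). intros z [u [v [Hu [Hv ->]]]].
      apply Heq in Hv. unfold Hc_Sigma, ctrl_space, cspan in Hu, Hv.
      revert Hu Hv. apply closure_add. apply span_add.
    + intros F x. apply closure_incl. exists x, vzero. split; [apply F|]. split.
      * apply closure_incl. apply span_zero.
      * symmetry. apply vadd_0.
  - unfold sys_controllable, sys_observable, full. split; intros F x; apply Heq; apply F.
  - unfold sys_observable, sys_minimal, full. split.
    + intro F. split; auto. intro x; apply Heq; apply F.
    + tauto.
Qed.
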